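(* Let $d\ge2$ and $c\in\mathbb{C}_p$ (no further conditions). The sequence $(a_n)$ satisfies: (1) for $1\le n<d$, $a_n=\binom{1/d}{n}c^n$; (2) for $d^i\le n<d^{i+1}$ with $i\ge1$, $$a_n=\sum\alpha(n_0,n_1,\dots,n_{d^i-1}),$$ where the sum runs over all tuples of non-negative integers $(n_0,\dots,n_{d^i-1})$ with $n_0+d\sum_{k=1}^{d^i-1}kn_k=n$, and $$\alpha(n_0,\dots,n_{d^i-1})=\frac{c^{n_0}}{d^{n_0}n_0!}\prod_{k=1}^{d^i-1}\frac{a_k^{n_k}}{d^{n_k}n_k!}\prod_{j=0}^{\sum_{k=0}^{d^i-1}n_k-1}(1-jd).$$
   Context: Let $\mathbb{C}_p$ be the completion of an algebraic closure of $\mathbb{Q}_p$, $d\ge2$ an integer, $c\in\mathbb{C}_p$, and $(a_n)_{n\ge1}$ the unique sequence in $\mathbb{C}_p$ with the formal identity $\left(1+\sum_{n\ge1}a_nx^n\right)^d=1+cx+\sum_{n\ge1}a_nx^{nd}$. $\binom{1/d}{n}$ is the generalized binomial coefficient. *)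

(* Defs.v *)
From HB Require Import structures.
From mathcomp Require Import all_boot all_order all_algebra.
Set Implicit Arguments. Unset Strict Implicit. Unset Printing Implicit Defensive.
Import Order.TTheory GRing.Theory Num.Theory.
Local Open Scope ring_scope.

Definition gbinom (F : fieldType) (r : F) (n : nat) : F :=
  (\prod_(i < n) (r - i%:R)) / (n`!)%:R.

Definition lhs_trunc (F : fieldType) (a : nat -> F) (N : nat) : {poly F} :=
  1 + \sum_(1 <= n < N.+1) a n *: 'X^n.

(* Truncation of the right-hand side series 1 + c x + sum_{n>=1} a_n x^{nd}
   (all monomials of degree <= N are present) *)
Definition rhs_trunc (F : fieldType) (d : nat) (c : F) (a : nat -> F) (N : nat)
  : {poly F} :=
  1 + c *: 'X + \sum_(1 <= n < N.+1) a n *: 'X^(n * d).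

(* The formal identity (1 + sum a_n x^n)^d = 1 + c x + sum a_n x^{nd},
   stated coefficientwise: the N-th coefficient of each side only involves
   the terms of degree <= N. The value a 0 is irrelevant. *)
Definition formal_identity (F : fieldType) (d : nat) (c : F) (a : nat -> F) : Prop :=
  forall N : nat, ((lhs_trunc a N) ^+ d)`_N = (rhs_trunc d c a N)`_N.

(* alpha(n_0, ..., n_{m-1}) where nk k = n_k, m = d^i *)
Definition alpha (F : fieldType) (d : nat) (c : F) (a : nat -> F) (m : nat)
  (nk : nat -> nat) : F :=
  c ^+ nk 0%N / ((d%:R) ^+ nk 0%N * ((nk 0%N)`!)%:R)
  * (\prod_(1 <= k < m) (a k ^+ nk k / ((d%:R) ^+ nk k * ((nk k)`!)%:R)))
  * \prod_(0 <= j < \sum_(0 <= k < m) nk k) (1 - j%:R * d%:R).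

Definition tup_nat (m n : nat) (t : m.-tuple 'I_n.+1) (k : nat) : nat :=
  nth 0%N (map val t) k.

(* Main.v *)
Require Import Defs.
From HB Require Import structures.
From mathcomp Require Import all_boot all_order all_algebra.
From mathcomp Require Import ring zify.
Set Implicit Arguments. Unset Strict Implicit. Unset Printing Implicit Defensive.
Import Order.TTheory GRing.Theory Num.Theory.
Local Open Scope ring_scope.

Section Aux.
Variable F : fieldType.
Hypothesis hchar : [pchar F] =i pred0.

Lemma natf_neq0 n : (n != 0)%N -> (n%:R : F) != 0.
Proof. by move=> hn; rewrite (pcharf0P F).1 //. Qed.

Definition eqm (n : nat) (p q : {poly F}) := forall k, (k <= n)%N -> p`_k = q`_k.

Lemma eqm_refl n p : eqm n p p. Proof. by []. Qed.
Lemma eqm_sym n p q : eqm n p q -> eqm n q p. Proof. by move=> h k hk; rewrite h. Qed.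
Lemma eqm_trans n p q r : eqm n p q -> eqm n q r -> eqm n p r.
Proof. by move=> h1 h2 k hk; rewrite h1 // h2. Qed.
Lemma eqm_le n m p q : (m <= n)%N -> eqm n p q -> eqm m p q.
Proof. by move=> hmn h k hk; apply: h; apply: leq_trans hmn. Qed.
Lemma eqmD n p q p' q' : eqm n p q -> eqm n p' q' -> eqm n (p + p') (q + q').
Proof. by move=> h h' k hk; rewrite !coefD h // h'. Qed.
Lemma eqmN n p q : eqm n p q -> eqm n (- p) (- q).
Proof. by move=> h k hk; rewrite !coefN h. Qed.
Lemma eqmB n p q p' q' : eqm n p q -> eqm n p' q' -> eqm n (p - p') (q - q').
Proof. by move=> h h'; apply: eqmD => //; apply: eqmN. Qed.
Lemma eqmM n p q p' q' : eqm n p q -> eqm n p' q' -> eqm n (p * p') (q * q').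
Proof.
move=> h h' k hk; rewrite !coefM; apply: eq_bigr => j _.
have hj : (j <= n)%N by apply: leq_trans hk; rewrite -ltnS.
by rewrite h // h' //; apply: leq_trans (leq_subr _ _) hk.
Qed.
Lemma eqmX n p q m : eqm n p q -> eqm n (p ^+ m) (q ^+ m).
Proof. by move=> h; elim: m => [|m IH] //; rewrite !exprS; apply: eqmM. Qed.
Lemma eqm_sum n (I : Type) (r : seq I) (P : pred I) (G H : I -> {poly F}) :
  (forall i, P i -> eqm n (G i) (H i)) ->
  eqm n (\sum_(i <- r | P i) G i) (\sum_(i <- r | P i) H i).
Proof.
move=> h k hk; rewrite !coef_sum; apply: eq_bigr => i Pi; exact: h.
Qed.
Lemma eqmZ n a p q : eqm n p q -> eqm n (a *: p) (a *: q).
Proof. by move=> h k hk; rewrite !coefZ h. Qed.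
Lemma eqm_deriv n p q : eqm n.+1 p q -> eqm n p^`() q^`().
Proof. by move=> h k hk; rewrite !coef_deriv h. Qed.


Lemma val_mul K (p q : {poly F}) : (forall i, (i < K)%N -> p`_i = 0) ->
  forall j, (j < K)%N -> (p * q)`_j = 0.
Proof.
move=> h j hj; rewrite coefM big1 // => i _; rewrite h ?mul0r //.
by apply: leq_ltn_trans hj; rewrite -ltnS.
Qed.

Lemma val_exp (U : {poly F}) : U`_0 = 0 -> forall m j, (j < m)%N -> (U ^+ m)`_j = 0.
Proof.
move=> h0; elim=> [|m IH] j hj //; rewrite exprS coefM big1 // => i _.
case: i => [[|i] hi] /=; first by rewrite h0 mul0r.
by rewrite IH ?mulr0 //; lia.
Qed.

Lemma ode_uniq (d : nat) n (U Z : {poly F}) : (0 < d)%N -> U`_0 = 0 -> Z`_0 = 0 ->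
  eqm n (d%:R *: ((1 + U) * Z^`())) (Z * U^`()) -> eqm n.+1 Z 0.
Proof.
move=> hd hU hZ hL.
suff H : forall k, (k <= n.+1)%N -> forall j, (j <= k)%N -> Z`_j = 0.
  by move=> k hk; rewrite coef0 (H k hk k).
elim=> [|k IH] hk j hj.
  by move: hj; rewrite leqn0 => /eqP ->.
have hkn : (k <= n)%N by [].
have IH' := IH (ltnW hk).
rewrite leq_eqVlt in hj; case/orP: hj => [/eqP ->|hj]; last by apply: IH'.
have := hL k hkn.
rewrite coefZ coefM big_ord_recl big1; last first.
  move=> i _; rewrite coef_deriv IH' ?mul0rn ?mulr0 //=.
  by rewrite subnSK // leq_subr.
rewrite (_ : (Z * U^`())`_k = 0); last first.
  rewrite coefM big1 // => i _; rewrite IH' ?mul0r //; by rewrite -ltnS.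
rewrite addr0 /= subn0 coefD coef1 hU addr0 mul1r coef_deriv => /eqP.
rewrite mulf_eq0 (negbTE (natf_neq0 (n:=d) (lt0n_neq0 hd))) /= -mulr_natr mulf_eq0 (negbTE (natf_neq0 (n:=k.+1) isT)) orbF; by move/eqP.
Qed.


Lemma fact_neq0 m : ((m`!)%:R : F) != 0.
Proof. by apply: natf_neq0; rewrite -lt0n fact_gt0. Qed.

Lemma gbinom0 (r : F) : gbinom r 0 = 1.
Proof. by rewrite /gbinom big_ord0 fact0 divr1. Qed.

Lemma gbinomS (r : F) m : m.+1%:R * gbinom r m.+1 = (r - m%:R) * gbinom r m.
Proof.
rewrite /gbinom big_ord_recr /= factS natrM.
have h1 := fact_neq0 m; have h2 : (m.+1%:R : F) != 0 by apply: natf_neq0.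
field. by rewrite h1 addrC natr1 h2.
Qed.

Lemma b_rec (d : nat) m : (0 < d)%N ->
  d%:R * m.+1%:R * gbinom (d%:R : F)^-1 m.+1 = (1 - d%:R * m%:R) * gbinom (d%:R : F)^-1 m.
Proof.
move=> hd; rewrite -mulrA gbinomS mulrA mulrBr mulfV //.
by apply: natf_neq0; rewrite -lt0n.
Qed.

Definition Sser (d K : nat) (U : {poly F}) := \sum_(m < K.+1) gbinom (d%:R)^-1 m *: U ^+ m.

Lemma Sser_ode (d : nat) (U : {poly F}) K : (0 < d)%N ->
  d%:R *: ((1 + U) * (Sser d K U)^`()) - Sser d K U * U^`() =
  ((d%:R * K%:R - 1) * gbinom (d%:R)^-1 K) *: (U ^+ K * U^`()).
Proof.
move=> hd; elim: K => [|K IH].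
  rewrite /Sser big_ord_recr big_ord0 /= add0r gbinom0 expr0 scale1r derivC.
  by rewrite mulr0 scaler0 mulr0 mul1r mulr1 sub0r add0r scaleN1r.
rewrite /Sser in IH *; rewrite (big_ord_recr K.+1) /= derivD derivZ deriv_exp /=.
set S := \sum_(i < K.+1) _; set A := S^`(); move: IH; rewrite -/S -/A => IH.
set B := gbinom (d%:R)^-1 K.+1.
have hC : (d%:R * K%:R - 1) * gbinom (d%:R)^-1 K = - (d%:R * K.+1%:R * B).
  rewrite /B (b_rec K hd). ring.
move: IH; rewrite hC -!mul_polyC => IH; clearbody S A B.
have E : d%:R * ((1 + U) * (A + B%:P * (U^`() * U ^+ K *+ K.+1))) -
  (S + B%:P * U ^+ K.+1) * U^`() =
  (d%:R * ((1 + U) * A) - S * U^`()) +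
  ((d%:R * K.+1%:R * B%:P) * (U ^+ K * U^`())
   + ((d%:R * K.+1%:R - 1) * B%:P) * (U ^+ K.+1 * U^`())).
  have hk : forall p : {poly F}, p *+ K.+1 = p * K.+1%:R by move=> p; rewrite mulr_natr.
  rewrite exprSr hk.
  move: (U ^+ K) (U^`()) (K.+1%:R : {poly F}) (d%:R : {poly F}) => V W k1 d1; ring.
rewrite polyC_natr in IH; rewrite polyC_natr E IH.
rewrite !(polyCN, polyCM, polyCB, polyC1, polyC_natr) /=.
rewrite exprSr (_ : forall p : {poly F}, p *+ K.+1 = p * K.+1%:R); last by move=> p; rewrite mulr_natr.
move: (U ^+ K) (U^`()) (K.+1%:R : {poly F}) (d%:R : {poly F}) => V W k1 d1; ring.
Qed.


Lemma eqm_sub0 n p q : eqm n p q -> eqm n (p - q) 0.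
Proof. by move=> h k hk; rewrite coefB h // subrr coef0. Qed.
Lemma eqm_0sub n p q : eqm n (p - q) 0 -> eqm n p q.
Proof. by move=> h k hk; apply/eqP; rewrite -subr_eq0 -coefB h // coef0. Qed.

Lemma P_ode (d : nat) N (P U : {poly F}) : (0 < d)%N -> eqm N.+1 (P ^+ d) (1 + U) ->
  eqm N (d%:R *: ((1 + U) * P^`())) (P * U^`()).
Proof.
move=> hd h.
have h1 := eqm_deriv h; rewrite deriv_exp derivD derivC add0r in h1.
have h2 := eqmM (@eqm_refl N P) h1.
have h3 : P * (P^`() * P ^+ d.-1 *+ d) = d%:R *: (P ^+ d * P^`()).
  rewrite -mulrnAr -scaler_nat -!scalerAr; congr (_ *: _); rewrite mulrCA -exprS prednK // mulrC.
  done.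
rewrite h3 in h2; apply: eqm_trans h2.
by apply: eqmZ; apply: eqmM; [apply: eqm_sym; apply: eqm_le h|].
Qed.

Lemma Sser0 (d K : nat) (U : {poly F}) : U`_0 = 0 -> (Sser d K U)`_0 = 1.
Proof.
move=> hU; rewrite /Sser coef_sum big_ord_recl /= gbinom0 expr0 scale1r coef1 /=.
rewrite big1 ?addr0 // => i _; rewrite coefZ val_exp ?mulr0 //.
Qed.

Lemma main_coef (d : nat) N (P U : {poly F}) : (0 < d)%N -> U`_0 = 0 -> P`_0 = 1 ->
  eqm N.+1 (P ^+ d) (1 + U) -> P`_N.+1 = (Sser d N.+1 U)`_N.+1.
Proof.
move=> hd hU hP h.
set S := Sser d N.+1 U.
have hZ : eqm N.+1 (P - S) 0.
  apply: (ode_uniq hd hU); first by rewrite coefB hP Sser0 // subrr.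
  apply: eqm_0sub.
  have -> : d%:R *: ((1 + U) * (P - S)^`()) - (P - S) * U^`() =
    (d%:R *: ((1 + U) * P^`()) - P * U^`()) -
    (d%:R *: ((1 + U) * S^`()) - S * U^`()).
    rewrite derivB -!mul_polyC.
    by move: ((d%:R)%:P) (P^`()) (S^`()) (U^`()) => c0 p1 s1 u1; ring.
  apply: (@eqm_trans _ _ (0 - 0)); last by rewrite subr0. apply: eqmB; first by apply: eqm_sub0; apply: P_ode.
  rewrite /S Sser_ode // => k hk; rewrite coefZ coef0 (@val_mul N.+1) ?mulr0 //.
  by move=> i hi; apply: val_exp.
by apply/eqP; rewrite -subr_eq0 -coefB hZ // coef0.
Qed.


Lemma binom_scal m i : (i <= m)%N ->
  ((i`!)%:R)^-1 * (((m - i)`!)%:R)^-1 = (((m`!)%:R)^-1 * ('C(m, i))%:R : F).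
Proof.
move=> hi; rewrite -(bin_fact hi) !natrM.
have h1 := fact_neq0 i; have h2 := fact_neq0 (m - i).
have h3 : ('C(m, i)%:R : F) != 0 by apply: natf_neq0; rewrite -lt0n bin_gt0.
field; by rewrite h1 h2 h3.
Qed.

Lemma zpoly_coef (M N : nat) (t : nat -> {poly F}) m : (m <= N)%N ->
  (\prod_(k < M) \poly_(j < N.+1) ((((j`!)%:R)^-1 : F) *: t k ^+ j))`_m =
  (((m`!)%:R)^-1 : F) *: (\sum_(k < M) t k) ^+ m.
Proof.
elim: M m => [|M IH] m hm.
  rewrite !big_ord0 coef1; case: m hm => [|m] hm /=; first by rewrite fact0 invr1 scale1r expr0.
  by rewrite expr0n /= scaler0.
rewrite !big_ord_recr /= coefM addrC exprDn scaler_sumr.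
apply: eq_bigr => i _.
have him : (i <= m)%N by rewrite -ltnS.
rewrite IH ?(leq_trans him) // coef_poly ifT; last by rewrite ltnS (leq_trans (leq_subr _ _)).
rewrite -scaler_nat scalerA -scalerAl -scalerAr scalerA binom_scal // mulrC.
congr (_ *: _); first by rewrite mulrC.
Qed.


Lemma zpoly_sum (M N : nat) (E : nat -> nat -> {poly F}) m :
  (\prod_(k < M) \poly_(j < N.+1) E k j)`_m =
  \sum_(f : {ffun 'I_M -> 'I_N.+1} | (\sum_(k < M) (f k : nat) == m)%N)
     \prod_(k < M) E k (f k).
Proof.
under eq_bigr => k _ do rewrite poly_def.
rewrite bigA_distr_bigA /= coef_sum [RHS]big_mkcond /=; apply: eq_bigr => f _.
under eq_bigr => k _ do rewrite -mul_polyC.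
rewrite big_split /= prodrXr -rmorph_prod coefCM coefXn.
by rewrite eq_sym; case: eqP => _; rewrite ?mulr1 ?mulr0.
Qed.


Lemma coef_prod_mon (M : nat) (c : 'I_M -> F) (e : 'I_M -> nat) j :
  (\prod_(k < M) (c k *: 'X^(e k)))`_j = (\prod_(k < M) c k) * (j == \sum_(k < M) e k)%:R.
Proof.
under eq_bigr => k _ do rewrite -mul_polyC.
by rewrite big_split /= prodrXr -rmorph_prod coefCM coefXn.
Qed.

Lemma sum_ord_if (n s : nat) (G : nat -> F) :
  \sum_(m < n.+1) (if s == m then G m else 0) = if (s < n.+1)%N then G s else 0.
Proof.
case: ifP => hs.
  rewrite (bigD1 (Ordinal hs)) //= eqxx big1 ?addr0 // => i hi.
  by case: eqP => // hsi; move: hi; rewrite -val_eqE /= hsi eqxx.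
by rewrite big1 // => i _; case: eqP => // hsi; move: hs; rewrite hsi ltn_ord.
Qed.

Lemma Sser_coef (d n M : nat) (g : nat -> F) (w : nat -> nat) : (forall k, (0 < w k)%N) ->
  (Sser d n (\sum_(k < M) g k *: 'X^(w k)))`_n =
  \sum_(f : {ffun 'I_M -> 'I_n.+1} | (\sum_(k < M) w k * f k == n)%N)
    gbinom (d%:R)^-1 (\sum_(k < M) (f k : nat)) * ((\sum_(k < M) (f k : nat))`!)%:R
    * \prod_(k < M) (g k ^+ f k / ((f k)`!)%:R).
Proof.
move=> hw.
rewrite /Sser coef_sum.
have step : forall m : 'I_n.+1,
  (gbinom (d%:R)^-1 m *: (\sum_(k < M) g k *: 'X^(w k)) ^+ m)`_n =
  \sum_(f : {ffun 'I_M -> 'I_n.+1})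
     (if (\sum_(k < M) (f k : nat)) == m then
        gbinom (d%:R)^-1 m * (m`!)%:R *
        ((\prod_(k < M) (g k ^+ f k / ((f k)`!)%:R)) * (n == \sum_(k < M) w k * f k)%:R)
      else 0).
  move=> m.
  have hm : (m <= n)%N by rewrite -ltnS ltn_ord.
  have := @zpoly_coef M n (fun k => g k *: 'X^(w k)) m hm.
  rewrite (@zpoly_sum M n (fun k j => (((j`!)%:R)^-1 : F) *: (g k *: 'X^(w k)) ^+ j)) => /(congr1 (fun p => ((m`!)%:R : F) *: p)).
  rewrite scalerA mulfV ?fact_neq0 // scale1r => <-.
  rewrite -big_mkcond /= coefZ coefZ coef_sum mulr_sumr mulr_sumr.
  apply: eq_bigr => f _; rewrite mulrA; congr (_ * _).
  under eq_bigr => k _ do rewrite exprZn -exprM scalerA.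
  rewrite coef_prod_mon; congr (_ * _).
    by apply: eq_bigr => k _; rewrite mulrC.
rewrite (eq_bigr _ (fun m _ => step m)) exchange_big /= [RHS]big_mkcond /=.
apply: eq_bigr => f _.
rewrite (sum_ord_if n (\sum_(k < M) (f k : nat))
  (fun m => gbinom (d%:R)^-1 m * (m`!)%:R *
        ((\prod_(k < M) (g k ^+ f k / ((f k)`!)%:R)) * (n == \sum_(k < M) w k * f k)%:R))).
rewrite eq_sym; case: eqP => hn.
  rewrite ifT ?mulr1 //; rewrite ltnS; apply: (leq_trans _ (eq_leq hn)); apply: leq_sum => k _.
  by rewrite leq_pmull.
by case: ifP => _; rewrite ?mulr0.
Qed.


Lemma coef_tail (g : nat -> F) (w : nat -> nat) n A B : (1 <= A <= B)%N ->
  (forall m, (A <= m < B)%N -> (n < w m)%N) ->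
  eqm n (\sum_(1 <= m < B) g m *: 'X^(w m)) (\sum_(1 <= m < A) g m *: 'X^(w m)).
Proof.
move=> /andP[h1 h2] hw k hk; rewrite (@big_cat_nat _ _ _ A 1 B _ _ h1 h2) /= coefD.
suff -> : (\sum_(A <= i < B) g i *: 'X^(w i))`_k = 0 by rewrite addr0.
rewrite coef_sum big1_seq // => m /andP[_].
rewrite mem_index_iota => hm; rewrite coefZ coefXn.
by case: eqP => [hkm|]; rewrite ?mulr0 //; have := hw m hm; rewrite -hkm ltnNge (leq_trans hk) ?leqnn.
Qed.

Lemma lhs_eqm (a : nat -> F) k n : (k <= n)%N -> eqm k (lhs_trunc a n) (lhs_trunc a k).
Proof.
move=> hk; apply: eqmD => //.
by apply: (@coef_tail a id); rewrite ?ltnS // => m /andP[].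
Qed.

Lemma rhs_eqm (d : nat) (c : F) (a : nat -> F) k n : (0 < d)%N -> (k <= n)%N ->
  eqm k (rhs_trunc d c a n) (rhs_trunc d c a k).
Proof.
move=> hd hk; apply: eqmD => //.
apply: (@coef_tail a (fun m => m * d)%N); rewrite ?ltnS // => m /andP[hm _].
by apply: (leq_trans hm); rewrite leq_pmulr.
Qed.

Lemma hPd (d : nat) (c : F) (a : nat -> F) n : (0 < d)%N -> formal_identity d c a ->
  eqm n ((lhs_trunc a n) ^+ d) (rhs_trunc d c a n).
Proof.
move=> hd ha k hk.
rewrite (eqmX d (lhs_eqm a hk)) // ha.
by rewrite (rhs_eqm c a hd hk).
Qed.

Lemma lhs_coef (a : nat -> F) n j : (lhs_trunc a n)`_j =
  if j == 0%N then 1 else if (j <= n)%N then a j else 0.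
Proof.
rewrite /lhs_trunc coefD coef1 coef_sum.
case: j => [|j] /=.
  by rewrite big1_seq ?addr0 // => m /andP[_]; rewrite mem_index_iota coefZ coefXn => /andP[hm _];
     case: eqP => [h|]; rewrite ?mulr0 //; move: hm; rewrite -h.
rewrite add0r; case: ifP => hj.
  rewrite (bigD1_seq j.+1) ?iota_uniq ?mem_index_iota //= coefZ coefXn eqxx mulr1.
  rewrite big1 ?addr0 // => m hm; rewrite coefZ coefXn eq_sym (negbTE hm) mulr0 //.
rewrite big1_seq // => m /andP[_]; rewrite mem_index_iota coefZ coefXn => /andP[_ hm].
by case: eqP => [h|]; rewrite ?mulr0 //; move: hj; rewrite h -ltnS hm.
Qed.

Lemma Sser_eqm (d K n : nat) (U V : {poly F}) : eqm n U V -> eqm n (Sser d K U) (Sser d K V).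
Proof. by move=> h; apply: eqm_sum => m _; apply: eqmZ; apply: eqmX. Qed.


Lemma tup_nat_mk M n (f : 'I_M -> 'I_n.+1) (k : 'I_M) :
  tup_nat [tuple f i | i < M] k = f k.
Proof.
rewrite /tup_nat (nth_map (f k)) ?size_tuple ?ltn_ord //.
by rewrite -(tnth_nth (f k) [tuple f i | i < M] k) tnth_mktuple.
Qed.

Lemma bfact (d s : nat) : (0 < d)%N ->
  gbinom (d%:R : F)^-1 s * (s`!)%:R =
  (\prod_(0 <= j < s) (1 - j%:R * d%:R)) * ((d%:R : F) ^+ s)^-1.
Proof.
move=> hd; have hd0 : (d%:R : F) != 0 by apply: natf_neq0; rewrite -lt0n.
rewrite /gbinom mulfVK ?fact_neq0 // big_mkord.
have hP : ((d%:R : F)^-1) ^+ s = \prod_(j < s) (d%:R : F)^-1 by rewrite prodr_const card_ord.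
rewrite -exprVn hP -big_split /=.
apply: eq_bigr => j _; field; done.
Qed.

Lemma a_Sser (d : nat) (c : F) (a : nat -> F) N : (0 < d)%N -> formal_identity d c a ->
  a N.+1 = (Sser d N.+1 (c *: 'X + \sum_(1 <= m < N.+2) a m *: 'X^(m * d)))`_N.+1.
Proof.
move=> hd ha.
have hU : (c *: 'X + \sum_(1 <= m < N.+2) a m *: 'X^(m * d))`_0 = 0.
  rewrite coefD coefZ coefX mulr0 add0r coef_sum big1_seq // => m /andP[_].
  rewrite mem_index_iota coefZ coefXn => /andP[hm _]; case: eqP => [h|]; rewrite ?mulr0 //.
  by have := muln_gt0 m d; rewrite hm hd -h.
have := main_coef hd hU _ _ (N := N) (P := lhs_trunc a N.+1).
rewrite !lhs_coef /= leqnn => -> //.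
by move=> k hk; rewrite addrA (@hPd d c a N.+1 hd ha).
Qed.


Lemma part1 (d : nat) (c : F) (a : nat -> F) n : (2 <= d)%N -> formal_identity d c a ->
  (1 <= n < d)%N -> a n = gbinom (d%:R)^-1 n * c ^+ n.
Proof.
move=> hd2 ha /andP[]; case: n => [//|N] _ hNd.
have hd : (0 < d)%N by apply: leq_trans hd2.
rewrite (a_Sser N hd ha).
have hE : eqm N.+1 (c *: 'X + \sum_(1 <= m < N.+2) a m *: 'X^(m * d))
                   (c *: 'X + \sum_(1 <= m < 1) a m *: 'X^(m * d)).
  apply: eqmD => //; apply: (@coef_tail a (fun m => m * d)%N) => // m /andP[hm _].
  by apply: (leq_trans hNd); rewrite leq_pmull.
rewrite (Sser_eqm _ _ hE) // big_geq // addr0 /Sser coef_sum big_ord_recr /=.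
rewrite big1 ?add0r.
  by rewrite coefZ exprZn coefZ coefXn eqxx mulr1.
move=> m _; rewrite coefZ exprZn coefZ coefXn.
have hm := ltn_ord m; by rewrite (_ : (N.+1 == _) = false) ?mulr0 // eq_sym ltn_eqF.
Qed.


Lemma part2_gen (d : nat) (c : F) (a : nat -> F) M n : (0 < d)%N -> (0 < M)%N ->
  (Sser d n (c *: 'X + \sum_(1 <= m < M) a m *: 'X^(m * d)))`_n =
  \sum_(t : M.-tuple 'I_n.+1 |
        (tup_nat t 0 + d * \sum_(1 <= k < M) k * tup_nat t k == n)%N)
     alpha d c a M (tup_nat t).
Proof.
move=> hd; case: M => [//|M] _.
pose g k := if k is 0 then c else a k.
pose w k := if k is 0 then 1%N else (k * d)%N.
have hA : c *: 'X + \sum_(1 <= m < M.+1) a m *: 'X^(m * d) =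
          \sum_(k < M.+1) g k *: 'X^(w k).
  rewrite big_ord_recl /= expr1 big_add1 /= big_mkord; congr (_ + _).
have hw : forall k, (0 < w k)%N by case=> //= k; rewrite muln_gt0 hd.
rewrite hA (@Sser_coef d n M.+1 g w hw).
pose h (f : {ffun 'I_M.+1 -> 'I_n.+1}) := [tuple f i | i < M.+1].
have hb : bijective h.
  exists (fun t => [ffun k => tnth t k]).
    by move=> f; apply/ffunP => k; rewrite ffunE tnth_mktuple.
  by move=> t; apply: eq_from_tnth => k; rewrite tnth_mktuple ffunE.
rewrite (reindex h (onW_bij _ hb)) /=.
have ht : forall f (k : 'I_M), tup_nat (h f) k.+1 = f (lift ord0 k).
  by move=> f k; exact: (tup_nat_mk f (lift ord0 k)).
have h0 : forall f, tup_nat (h f) 0 = f ord0.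
  by move=> f; exact: (tup_nat_mk f ord0).
apply: eq_big => f.
  rewrite h0 big_add1 /= big_mkord big_ord_recl /= mul1n.
  congr (_ + _ == _)%N; rewrite big_distrr /=; apply: eq_bigr => k _.
  by rewrite ht mulnCA mulnA mulnC.
move=> _.
rewrite /alpha h0 big_add1 /= big_mkord.
under [\prod_(i < M) _]eq_bigr => k _ do rewrite ht.
have hk : forall f (k : 'I_M.+1), tup_nat (h f) k = f k by move=> f' k; exact: tup_nat_mk.
rewrite [\sum_(0 <= k < M.+1) _]big_mkord.
under [\sum_(k < M.+1) tup_nat _ _]eq_bigr => k _ do rewrite hk.
rewrite bfact //.
set P := \prod_(0 <= j < _) _.
rewrite expr_sum !big_ord_recl /=.
have e : forall x y z : F, x / (y * z) = x / z * y^-1.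
  by move=> x y z; rewrite invfM; ring.
rewrite [X in _ = _ * X * _](eq_bigr (fun k : 'I_M => a (bump 0 k) ^+ f (lift ord0 k) / (f (lift ord0 k))`!%:R * ((d%:R ^+ f (lift ord0 k))^-1))); last first.
  by move=> k _; rewrite e.
rewrite !big_split /= !prodfV.
move: (\prod_(i < M) a (bump 0 i) ^+ _) (\prod_(i < M) (d%:R : F) ^+ f (lift ord0 i)) (\prod_(i < M) ((f (lift ord0 i))`!)%:R : F) => A D G.
rewrite !invfM; ring.
Qed.


Lemma part2 (d : nat) (c : F) (a : nat -> F) i n : (2 <= d)%N -> formal_identity d c a ->
  (1 <= i)%N -> (d ^ i <= n < d ^ i.+1)%N ->
  a n = \sum_(t : (d ^ i).-tuple 'I_n.+1 |
                 (tup_nat t 0 + d * \sum_(1 <= k < d ^ i) k * tup_nat t k == n)%N)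
             alpha d c a (d ^ i) (tup_nat t).
Proof.
move=> hd2 ha hi /andP[h1 h2].
have hd : (0 < d)%N by apply: leq_trans hd2.
have hM : (0 < d ^ i)%N by rewrite expn_gt0 hd.
case: n h1 h2 => [|N] h1 h2; first by move: (leq_trans hM h1).
rewrite (a_Sser N hd ha).
have hE : eqm N.+1 (c *: 'X + \sum_(1 <= m < N.+2) a m *: 'X^(m * d))
                   (c *: 'X + \sum_(1 <= m < d ^ i) a m *: 'X^(m * d)).
  apply: eqmD => //; apply: (@coef_tail a (fun m => m * d)%N).
    by rewrite hM /= (leq_trans h1).
  move=> m /andP[hm _]; apply: (leq_trans h2).
  by rewrite expnSr leq_mul2r hm orbT.
by rewrite (Sser_eqm _ _ hE) // part2_gen.
Qed.

End Aux.

Unset Implicit Arguments.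
Set Strict Implicit.

Theorem proposition3p1 (F : fieldType) (hchar : [pchar F] =i pred0)
  (d : nat) (hd : (2 <= d)%N) (c : F) (a : nat -> F)
  (ha : formal_identity d c a) :
  (forall n : nat, (1 <= n < d)%N -> a n = gbinom (d%:R)^-1 n * c ^+ n)
  /\
  (forall i n : nat, (1 <= i)%N -> (d ^ i <= n < d ^ i.+1)%N ->
     a n = \sum_(t : (d ^ i).-tuple 'I_n.+1 |
                 (tup_nat t 0 + d * \sum_(1 <= k < d ^ i) k * tup_nat t k == n)%N)
             alpha d c a (d ^ i) (tup_nat t)).
Proof.
split.
  by move=> n hn; apply: (part1 hchar hd ha hn).
by move=> i n hi hn; apply: (part2 hchar hd ha hi hn).
Qed.
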